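(* Let $\mathcal D$ be a $(\gamma,V)$-stable distribution of $\mathbf X$. Let $E_*$ be an optimal equivalence class, let $G^*\in E_*$, and let $F\subseteq G^*$ be the set of families of the variables of $\bar V$ in $G^*$. Then: (1) $G^*\setminus F\in\mathcal G_V$; (2) $\mathcal S(G^*\setminus F)=\max_{G\in\mathcal G_V}\mathcal S(G)$; (3) the score of $F$ is maximal among the legal family sets for $\bar V$.
   Context: $\mathbf X=(X_1,\dots,X_d)$ is a random vector; $k$ a fixed positive integer. A family is $\langle X_i,\Pi\rangle$ with $\Pi\subseteq\mathbf X\setminus\{X_i\}$, $|\Pi|\le k$, and $H(\langle X_i,\Pi\rangle)=H(X_i\mid\Pi)$; $\mathcal F_{d,k}$ is the set of families. $\mathcal G_{d,k}$ = DAGs over $\mathbf X$ with in-degree $\le k$, identified with their family sets; for a family set $F$, $\mathcal S(F)=-\sum_{f\in F}H(f)$; $\mathcal S^*=\max_{G\in\mathcal G_{d,k}}\mathcal S(G)$. Markov equivalence classes (ECs) on $\mathcal G_{d,k}$ group DAGs with the same conditional independence constraints and share a score; an optimal EC has score $\mathcal S^*$. For $V\subseteq\mathbf X$, $\bar V:=\mathbf X\setminus V$, and $\mathcal G_V$ is the set of DAGs over $V$ with in-degree at most $k$. A legal family set for $\bar V$ is a set $F\subseteq\mathcal F_{d,k}$ containing exactly one family for each variable in $\bar V$ and no other families, and having no (directed) cycles. $(\gamma,V)$-stable: for $\gamma>0$ and $V\subseteq\mathbf X$, (1) in every $G\in\mathcal G_{d,k}$ with $\mathcal S(G)\ge\mathcal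 S^*-\gamma$ all parents of every variable in $V$ are in $V$; (2) for the marginal distribution on $V$ (over $\mathcal G_V$) there is a unique optimal EC and the score gap between the best and second-best EC is more than $\gamma$. *)

(* Defs.v *)
From HB Require Import structures.
From mathcomp Require Import all_boot all_order all_algebra.
From mathcomp Require Import boolp reals exp.
Set Implicit Arguments. Unset Strict Implicit. Unset Printing Implicit Defensive.
Import Order.TTheory GRing.Theory Num.Theory.
Local Open Scope ring_scope.

(* Variables are X_0, ..., X_{d-1}, indexed by 'I_d.  X_i takes values in the
   finite set T i; outcomes of the random vector are elements of [outcome T]. *)
Definition outcome (d : nat) (T : 'I_d -> finType) := {dffun forall i : 'I_d, T i}.

Section Entropy.
Variables (R : realType) (d : nat) (T : 'I_d -> finType).
Variable p : outcome T -> R.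

Definition is_pmf := (forall x, 0 <= p x) /\ \sum_(x : outcome T) p x = 1.

Definition marg (S : {set 'I_d}) (x : outcome T) : R :=
  \sum_(y : outcome T | [forall j in S, y j == x j]) p y.

(* conditional entropy H(X_i | X_Pi) = E[ - ln P(X_i | X_Pi) ]
   (terms with p x = 0 contribute 0, i.e. 0 log 0 = 0) *)
Definition condH (i : 'I_d) (Pi : {set 'I_d}) : R :=
  - \sum_(x : outcome T) p x * ln (marg (i |: Pi) x / marg Pi x).
End Entropy.

Section Graphs.
Variables (d k : nat).

Definition fam := ('I_d * {set 'I_d})%type.

Definition is_family (f : fam) : bool := (f.1 \notin f.2) && (#|f.2| <= k)%N.

Definition edge (F : {set fam}) : rel 'I_d :=
  fun x y => [exists Pi : {set 'I_d}, ((y, Pi) \in F) && (x \in Pi)].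

Definition acyclic (F : {set fam}) : Prop :=
  forall x y, edge F x y -> ~~ connect (edge F) y x.

Definition legal_for (W : {set 'I_d}) (F : {set fam}) : Prop :=
  [/\ forall f, f \in F -> is_family f,
      forall f, f \in F -> f.1 \in W,
      forall v, v \in W -> exists2 f, f \in F & f.1 = v,
      forall f g, f \in F -> g \in F -> f.1 = g.1 -> f = g
    & acyclic F].

Definition dag_dk (G : {set fam}) : Prop := legal_for setT G.

Definition dag_V (V : {set 'I_d}) (G : {set fam}) : Prop :=
  legal_for V G /\ forall f, f \in G -> f.2 \subset V.

(* the empty DAGs, used as default elements in the maxima below *)
Definition empty_dag (W : {set 'I_d}) : {set fam} := [set (i, set0) | i in W].

Definition adj (F : {set fam}) : rel 'I_d := fun x y => edge F x y || edge F y x.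

Definition active_trail (F : {set fam}) (Z : {set 'I_d}) (s : seq 'I_d) : Prop :=
  match s with
  | [::] => False
  | x :: t =>
    [/\ path (adj F) x t, uniq s &
      forall j, (0 < j)%N -> (j.+1 < size s)%N ->
        let a := nth x s j.-1 in let b := nth x s j in let c := nth x s j.+1 in
        if edge F a b && edge F c b
        then exists2 z, z \in Z & connect (edge F) b z
        else b \notin Z]
  end.

Definition dsep (F : {set fam}) (a b : 'I_d) (Z : {set 'I_d}) : Prop :=
  ~ exists s, [/\ active_trail F Z s, head a s = a & last a s = b].

Definition markov_equiv (V : {set 'I_d}) (G1 G2 : {set fam}) : Prop :=
  forall a b (Z : {set 'I_d}), a \in V -> b \in V -> Z \subset V -> a != b ->
    a \notin Z -> b \notin Z -> (dsep G1 a b Z <-> dsep G2 a b Z).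
End Graphs.

Section Scores.
Variables (R : realType) (d k : nat) (T : 'I_d -> finType) (p : outcome T -> R).

Definition score (F : {set fam d}) : R := - \sum_(f in F) condH p f.1 f.2.

Definition Sstar : R :=
  \big[Num.max/score (empty_dag setT)]_(G : {set fam d} | `[< dag_dk k G >]) score G.

(* max over G_V of the score (for the marginal on V, whose conditional
   entropies H(X_i | Pi), Pi in V, coincide with those of the joint) *)
Definition SstarV (V : {set 'I_d}) : R :=
  \big[Num.max/score (empty_dag V)]_(G : {set fam d} | `[< dag_V k V G >]) score G.

Definition stable (gamma : R) (V : {set 'I_d}) : Prop :=
  [/\ 0 < gamma,
      (forall G : {set fam d}, dag_dk k G -> Sstar - gamma <= score G ->
         forall f, f \in G -> f.1 \in V -> f.2 \subset V) &
      exists2 G0 : {set fam d}, dag_V k V G0 /\ score G0 = SstarV V &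
        (forall G, dag_V k V G -> score G = SstarV V -> markov_equiv V G G0) /\
        (forall G, dag_V k V G -> ~ markov_equiv V G G0 ->
           score G < SstarV V - gamma)].
End Scores.

(* Main.v *)
Require Import Defs.
From HB Require Import structures.
From mathcomp Require Import all_boot all_order all_algebra.
From mathcomp Require Import boolp reals exp.
Import Order.TTheory GRing.Theory Num.Theory.
Local Open Scope ring_scope.

Set Implicit Arguments.
Section Helpers.
Variables (d k : nat).

Lemma path_fwd (e e' : rel 'I_d) (S : pred 'I_d) :
  (forall a b, a \in S -> e a b -> (b \in S) && e' a b) ->
  forall p u, u \in S -> path e u p -> path e' u p.
Proof.
move=> H; elim=> [//|v p IH] u uS /= /andP[euv pp].
have /andP[vS e'uv] := H _ _ uS euv.
by rewrite e'uv (IH v vS pp).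
Qed.

Lemma path_bwd (e e' : rel 'I_d) (S : pred 'I_d) :
  (forall a b, b \in S -> e a b -> (a \in S) && e' a b) ->
  forall p u, last u p \in S -> path e u p -> (u \in S) && path e' u p.
Proof.
move=> H; elim=> [|v p IH] u /=; first by move=> ->.
move=> lS /andP[euv pp].
have /andP[vS pp'] := IH v lS pp.
have /andP[uS e'uv] := H _ _ vS euv.
by rewrite uS e'uv pp'.
Qed.

Arguments path_fwd {e e' S}.
Arguments path_bwd {e e' S}.

Lemma edgeU (A B : {set fam d}) x y :
  edge (A :|: B) x y = edge A x y || edge B x y.
Proof.
apply/idP/idP.
- move/existsP=> [Pi /andP[]]; rewrite in_setU => /orP[] h xP.
  + by apply/orP; left; apply/existsP; exists Pi; rewrite h.
  + by apply/orP; right; apply/existsP; exists Pi; rewrite h.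
- move=> /orP[] /existsP[Pi /andP[h xP]]; apply/existsP; exists Pi;
  by rewrite in_setU h ?orbT.
Qed.

Lemma edge_sub (A B : {set fam d}) : A \subset B -> forall x y, edge A x y -> edge B x y.
Proof.
move=> sAB x y /existsP[Pi /andP[h xP]]; apply/existsP; exists Pi.
by rewrite (subsetP sAB _ h).
Qed.

Lemma acyclic_sub (A B : {set fam d}) : A \subset B -> acyclic B -> acyclic A.
Proof.
move=> sAB aB x y exy; apply/negP => /connectP[p pp lp].
have := aB x y (edge_sub sAB _ _ exy); move/negP; apply.
apply/connectP; exists p => //.
apply: (@path_fwd (edge A) (edge B) predT) => // a b _ h.
by rewrite (edge_sub sAB _ _ h).
Qed.

Lemma edgeA_V (V : {set 'I_d}) (A : {set fam d}) :
  (forall f, f \in A -> (f.1 \in V) && (f.2 \subset V)) -> forall x y,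
  edge A x y -> (x \in V) && (y \in V).
Proof.
move=> HA x y /existsP[Pi /andP[h xP]].
have /andP[/= yV sV] := HA _ h.
by rewrite yV (subsetP sV _ xP).
Qed.

Lemma edgeB_V (V : {set 'I_d}) (B : {set fam d}) :
  (forall f, f \in B -> f.1 \notin V) -> forall x y, edge B x y -> y \notin V.
Proof. by move=> HB x y /existsP[Pi /andP[h xP]]; exact: (HB _ h). Qed.

Arguments edgeA_V {V A}.
Arguments edgeB_V {V B}.

Lemma acyclicU (V : {set 'I_d}) (A B : {set fam d}) :
  (forall f, f \in A -> (f.1 \in V) && (f.2 \subset V)) ->
  (forall f, f \in B -> f.1 \notin V) ->
  acyclic A -> acyclic B -> acyclic (A :|: B).
Proof.
move=> HA HB aA aB.
have Hb : forall a b, b \in mem V -> edge (A :|: B) a b -> (a \in mem V) && edge A a b.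
  move=> a b bV; rewrite edgeU => /orP[] h.
  * by rewrite h; have /andP[->] := edgeA_V HA _ _ h.
  * by move: (edgeB_V HB _ _ h); rewrite bV.
have Hf : forall a b, a \in mem (~: V) -> edge (A :|: B) a b -> (b \in mem (~: V)) && edge B a b.
  move=> a b aV; rewrite edgeU => /orP[] h.
  * by move: aV; rewrite inE; have /andP[-> _] := edgeA_V HA _ _ h.
  * by rewrite h inE (edgeB_V HB _ _ h).
move=> x y; rewrite edgeU => exy; apply/negP => /connectP[p pp lp].
case yV: (y \in V).
- have eA : edge A x y.
    case/orP: exy => // /(edgeB_V HB _ _); by rewrite yV.
  have /andP[xV _] := edgeA_V HA _ _ eA.
  have /andP[_ pA] := path_bwd Hb p y ltac:(by rewrite -lp) pp.
  have := aA x y eA; move/negP; apply; apply/connectP; by exists p.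
- have eB : edge B x y.
    case/orP: exy => // /(edgeA_V HA _ _) /andP[_]; by rewrite yV.
  have pB := path_fwd Hf p y ltac:(by rewrite inE yV) pp.
  have := aB x y eB; move/negP; apply; apply/connectP; by exists p.
Qed.

End Helpers.
Unset Implicit Arguments.
Section Main.
Variables (R : realType) (d k : nat) (T : 'I_d -> finType) (p : outcome T -> R).

Lemma score_disj (A B : {set fam d}) : [disjoint A & B] ->
  score p (A :|: B) = score p A + score p B.
Proof.
move=> dAB; rewrite /score (eq_bigl [predU A & B]); last by move=> f; rewrite in_setU.
by rewrite bigU //= opprD.
Qed.

Lemma le_Sstar G : dag_dk k G -> score p G <= Sstar k p.
Proof. by move=> dG; rewrite /Sstar; apply: le_bigmax_cond; apply/asboolP. Qed.

Lemma union_dag (V : {set 'I_d}) (A B : {set fam d}) :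
  (forall f, f \in A -> (f.1 \in V) && (f.2 \subset V)) ->
  legal_for k V A -> legal_for k (~: V) B -> dag_dk k (A :|: B).
Proof.
move=> HA [A1 A2 A3 A4 A5] [B1 B2 B3 B4 B5].
have HB : forall f, f \in B -> f.1 \notin V by move=> f /B2; rewrite inE.
split.
- by move=> f; rewrite in_setU => /orP[/A1|/B1].
- by move=> f; rewrite in_setT.
- move=> v _; case vV: (v \in V).
  + by have [f fA <-] := A3 v vV; exists f; rewrite ?in_setU ?fA.
  + have [f fB <-] := B3 v ltac:(by rewrite inE vV).
    by exists f; rewrite ?in_setU ?fB ?orbT.
- move=> f g; rewrite !in_setU => /orP[] hf /orP[] hg e.
  + exact: A4.
  + by have := HB _ hg; have /andP[] := HA _ hf; rewrite e => ->.
  + by have := HB _ hf; have /andP[] := HA _ hg; rewrite e => ->.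
  + exact: B4.
- exact: acyclicU HA HB A5 B5.
Qed.

Lemma disj_AB (V : {set 'I_d}) (A B : {set fam d}) :
  (forall f, f \in A -> (f.1 \in V) && (f.2 \subset V)) ->
  (forall f, f \in B -> f.1 \notin V) -> [disjoint A & B].
Proof.
move=> HA HB; apply/pred0P => f /=; apply/negP => /andP[fA fB].
by have := HB _ fB; have /andP[-> _] := HA _ fA.
Qed.

Lemma empty_dag_V (V : {set 'I_d}) : dag_V k V (empty_dag V).
Proof.
have mem_e : forall f, f \in empty_dag V -> f.2 = set0 /\ f.1 \in V.
  by move=> f /imsetP[i iV ->].
split; last by move=> f /mem_e[-> _]; rewrite sub0set.
split.
- by move=> f /mem_e[e _]; rewrite /is_family e in_set0 cards0.
- by move=> f /mem_e[].
- by move=> v vV; exists (v, set0) => //; apply/imsetP; exists v.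
- by move=> [f1 f2] [g1 g2] /mem_e[/= -> _] /mem_e[/= -> _] /= ->.
- move=> x y /existsP[Pi /andP[/mem_e[/= -> _]]]; by rewrite in_set0.
Qed.

End Main.
Arguments disj_AB {d V A B}.
Arguments union_dag {d k V A B}.
Arguments le_Sstar {R d k T} p {G}.
Arguments score_disj {R d T} p {A B}.

Theorem lemma4 (R : realType) (d k : nat) (T : 'I_d -> finType)
    (p : outcome T -> R) (gamma : R) (V : {set 'I_d}) :
  is_pmf p ->
  stable k p gamma V ->
  forall Gstar : {set fam d},
    dag_dk k Gstar -> score p Gstar = Sstar k p ->
    let F := [set f in Gstar | f.1 \notin V] in
    [/\ dag_V k V (Gstar :\: F),
        score p (Gstar :\: F) = SstarV k p V,
        legal_for k (~: V) F &
        forall F' : {set fam d}, legal_for k (~: V) F' -> score p F' <= score p F].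
Proof.
move=> _ [gpos Hpar _] Gs dG sG F.
have dG' := dG; case: dG' => [G1f _ G3 G4 G5].
set G1 := Gs :\: F.
have HG1 : forall f, f \in G1 -> (f.1 \in V) && (f.2 \subset V).
  move=> f /setDP[fG]; rewrite inE fG /= negbK => fV.
  rewrite fV /=; apply: (Hpar Gs dG _ f fG fV).
  by rewrite sG lerBlDr lerDl ltW.
have HF : forall f, f \in F -> f.1 \notin V by move=> f; rewrite inE => /andP[].
have GsE : Gs = G1 :|: F.
  apply/setP => f; rewrite !inE; case: (f \in Gs); by case: (f.1 \in V).
have dGF := disj_AB HG1 HF.
have sGs : score p Gs = score p G1 + score p F by rewrite {1}GsE score_disj.
have lG1 : legal_for k V G1.
  split.
  - by move=> f /setDP[/G1f].
  - by move=> f /HG1 /andP[->].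
  - move=> v vV; have [f fG fv] := G3 v (in_setT v).
    by exists f => //; rewrite !inE fG fv vV.
  - by move=> f g /setDP[fG _] /setDP[gG _]; apply: G4.
  - exact: acyclic_sub (subsetDl Gs F) G5.
have lF : legal_for k (~: V) F.
  split.
  - by move=> f; rewrite inE => /andP[/G1f].
  - by move=> f /HF; rewrite inE.
  - move=> v; rewrite inE => vV; have [f fG fv] := G3 v (in_setT v).
    by exists f => //; rewrite !inE fG fv vV.
  - by move=> f g; rewrite !inE => /andP[fG _] /andP[gG _]; apply: G4.
  - by apply: acyclic_sub G5; apply/subsetP => f; rewrite inE => /andP[].
have boundV : forall G, dag_V k V G -> score p G <= score p G1.
  move=> G [lG HGs].
  have HG : forall f, f \in G -> (f.1 \in V) && (f.2 \subset V).
    by move=> f fG; case: lG => _ H2 _ _ _; rewrite H2 // HGs.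
  have := le_Sstar p (union_dag HG lG lF).
  by rewrite score_disj ?(disj_AB HG HF) // -sG sGs lerD2r.
split; [ | | exact: lF | ].
- by split => // f /HG1 /andP[_ ->].
- apply/le_anti/andP; split.
  + rewrite /SstarV; apply: le_bigmax_cond; apply/asboolP; by split => // f /HG1 /andP[_ ->].

  + rewrite /SstarV; apply: (big_ind (fun x => x <= score p G1)).
    * apply: boundV; exact: empty_dag_V.
    * by move=> x y hx hy; rewrite ge_max hx hy.
    * by move=> G /asboolP; apply: boundV.
- move=> F' lF'.
  have HF' : forall f, f \in F' -> f.1 \notin V.
    by move=> f fF; case: lF' => _ H2 _ _ _; move: (H2 f fF); rewrite inE.
  have := le_Sstar p (union_dag HG1 lG1 lF').
  by rewrite score_disj ?(disj_AB HG1 HF') // -sG sGs lerD2l.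
Qed.
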